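(* $\lambda_1$ is isolated: there exists $\delta>\lambda_1$ such that $\lambda_1$ is the unique eigenvalue of problem (B2) in $(0,\delta)$.
   Context: Let $N\ge1$ be an integer. Problem (B2) is: $\left((-v')^N\right)'=\lambda^N N r^{N-1}v^N$ in $(0,1)$, $v'(0)=v(1)=0$. A number $\lambda>0$ is an eigenvalue of (B2) if (B2) has a solution $v\in C^2[0,1]$, $v\not\equiv0$. $\lambda_1>0$ denotes the first eigenvalue of (B2), i.e. the unique $\lambda>0$ for which (B2) has a solution positive in $(0,1)$ (it is simple and no eigenvalue lies in $(0,\lambda_1)$). *)

(* Defs.v *)
From Stdlib Require Import Reals Lra Lia.
Open Scope R_scope.

Definition deriv01_at (f : R -> R) (x l : R) : Prop :=
  forall eps : R, 0 < eps -> exists delta : R, 0 < delta /\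
    forall h : R, h <> 0 -> Rabs h < delta -> 0 <= x + h <= 1 ->
      Rabs ((f (x + h) - f x) / h - l) < eps.

Definition cont01_at (f : R -> R) (x : R) : Prop :=
  forall eps : R, 0 < eps -> exists delta : R, 0 < delta /\
    forall y : R, 0 <= y <= 1 -> Rabs (y - x) < delta -> Rabs (f y - f x) < eps.

Definition C2_01 (v v1 v2 : R -> R) : Prop :=
  (forall x, 0 <= x <= 1 -> deriv01_at v x (v1 x)) /\
  (forall x, 0 <= x <= 1 -> deriv01_at v1 x (v2 x)) /\
  (forall x, 0 <= x <= 1 -> cont01_at v2 x).

Definition solves_B2 (N : nat) (lam : R) (v v1 : R -> R) : Prop :=
  (forall r, 0 < r < 1 ->
     derivable_pt_lim (fun s => (- v1 s) ^ N) r
       (lam ^ N * INR N * r ^ (N - 1) * (v r) ^ N)) /\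
  v1 0 = 0 /\ v 1 = 0.

Definition is_eigenvalue_B2 (N : nat) (lam : R) : Prop :=
  0 < lam /\
  exists v v1 v2 : R -> R, C2_01 v v1 v2 /\ solves_B2 N lam v v1 /\
    exists r, 0 <= r <= 1 /\ v r <> 0.

Definition is_first_eigenvalue_B2 (N : nat) (lam : R) : Prop :=
  0 < lam /\
  exists v v1 v2 : R -> R, C2_01 v v1 v2 /\ solves_B2 N lam v v1 /\
    forall r, 0 < r < 1 -> 0 < v r.

(* Main.v *)
Require Import Defs.
From Stdlib Require Import Reals Lra Lia Classical.
Open Scope R_scope.


Definition cl (a b x : R) := Rmax a (Rmin b x).
Definition ext (g : R -> R) (a b : R) := fun x => g (cl a b x).

Lemma cl_in a b x : a <= b -> a <= cl a b x <= b.
Proof. intros; unfold cl, Rmax, Rmin; repeat destruct Rle_dec; lra. Qed.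

Lemma cl_id a b x : a <= x <= b -> cl a b x = x.
Proof. intros; unfold cl, Rmax, Rmin; repeat destruct Rle_dec; lra. Qed.

Lemma cl_lip a b x y : a <= b -> Rabs (cl a b y - cl a b x) <= Rabs (y - x).
Proof. intros; unfold cl, Rmax, Rmin; repeat destruct Rle_dec; unfold Rabs;
  repeat destruct Rcase_abs; lra. Qed.

Lemma cont_ext g a b : 0 <= a -> a <= b -> b <= 1 ->
  (forall x, a <= x <= b -> cont01_at g x) -> continuity (ext g a b).
Proof.
  intros Ha Hab Hb Hc x.
  unfold continuity_pt, continue_in, limit1_in, limit_in; simpl; unfold R_dist.
  intros eps He.
  destruct (Hc (cl a b x) (cl_in a b x Hab) eps He) as [d [Hd Hd']].
  exists d; split; [exact Hd|].
  intros y [_ Hy]. unfold ext.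
  apply Hd'.
  - pose proof (cl_in a b y Hab); lra.
  - eapply Rle_lt_trans; [apply cl_lip; exact Hab| exact Hy].
Qed.

Lemma deriv_local f g x l d : 0 < d -> (forall y, Rabs (y - x) < d -> f y = g y) ->
  derivable_pt_lim f x l -> derivable_pt_lim g x l.
Proof.
  intros Hd Hfg Hf eps He.
  destruct (Hf eps He) as [del Hdel].
  assert (Hm : 0 < Rmin del d) by (apply Rmin_pos; [apply cond_pos|exact Hd]).
  exists (mkposreal _ Hm). intros h Hh Hha. simpl in Hha.
  rewrite <- !Hfg.
  - apply Hdel; [exact Hh|]. eapply Rlt_le_trans; [exact Hha| apply Rmin_l].
  - replace (x - x) with 0 by ring. rewrite Rabs_R0; exact Hd.
  - replace (x + h - x) with h by ring. eapply Rlt_le_trans; [exact Hha| apply Rmin_r].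
Qed.

Lemma mvt01 g g' a b : 0 <= a -> a < b -> b <= 1 ->
  (forall x, a < x < b -> derivable_pt_lim g x (g' x)) ->
  (forall x, a <= x <= b -> cont01_at g x) ->
  exists c, a < c < b /\ g b - g a = g' c * (b - a).
Proof.
  intros Ha Hab Hb Hd Hc.
  set (h := ext g a b).
  assert (Hhd : forall x, a < x < b -> derivable_pt_lim h x (g' x)).
  { intros x Hx. apply (deriv_local g h x (g' x) (Rmin (x - a) (b - x))).
    - apply Rmin_pos; lra.
    - intros y Hy. unfold h, ext. rewrite cl_id; [reflexivity|].
      pose proof (Rmin_l (x-a) (b-x)); pose proof (Rmin_r (x-a) (b-x)).
      unfold Rabs in Hy; destruct Rcase_abs in Hy; lra.
    - apply Hd; exact Hx. }
  assert (pr1 : forall c, a < c < b -> derivable_pt h c).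
  { intros c Hc'. exists (g' c). apply Hhd; exact Hc'. }
  assert (pr2 : forall c, a < c < b -> derivable_pt id c).
  { intros; apply derivable_pt_id. }
  assert (Hch : forall c, a <= c <= b -> continuity_pt h c).
  { intros c _. apply cont_ext; lra || exact Hc. }
  assert (Hci : forall c, a <= c <= b -> continuity_pt id c).
  { intros; apply derivable_continuous_pt; apply derivable_pt_id. }
  destruct (MVT h id a b pr1 pr2 Hab Hch Hci) as [c [P HP]].
  exists c; split; [exact P|].
  rewrite (derive_pt_eq_0 h c (g' c) (pr1 c P) (Hhd c P)) in HP.
  rewrite (derive_pt_eq_0 id c 1 (pr2 c P) (derivable_pt_lim_id c)) in HP.
  unfold h, ext, id in HP. rewrite !cl_id in HP by lra. lra.
Qed.

Lemma evt01 g a b : 0 <= a -> a <= b -> b <= 1 ->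
  (forall x, a <= x <= b -> cont01_at g x) ->
  exists m, a <= m <= b /\ forall x, a <= x <= b -> g x <= g m.
Proof.
  intros Ha Hab Hb Hc.
  destruct (continuity_ab_maj (ext g a b) a b Hab) as [m [Hm1 Hm2]].
  { intros c _; apply cont_ext; auto. }
  exists m; split; [exact Hm2|]. intros x Hx.
  specialize (Hm1 x Hx). unfold ext in Hm1. rewrite !cl_id in Hm1 by lra. exact Hm1.
Qed.

Lemma ivt01 g a b : 0 <= a -> a <= b -> b <= 1 ->
  (forall x, a <= x <= b -> cont01_at g x) -> g a * g b <= 0 ->
  exists z, a <= z <= b /\ g z = 0.
Proof.
  intros Ha Hab Hb Hc Hs.
  destruct (IVT_cor (ext g a b) a b) as [z [Hz1 Hz2]].
  - apply cont_ext; auto.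
  - exact Hab.
  - unfold ext; rewrite !cl_id by lra; exact Hs.
  - exists z; split; [exact Hz1|]. unfold ext in Hz2; rewrite cl_id in Hz2 by lra; exact Hz2.
Qed.


Lemma cont01_pt f x : 0 <= x <= 1 -> cont01_at f x -> continuity_pt (ext f 0 1) x.
Proof.
  intros Hx Hc.
  unfold continuity_pt, continue_in, limit1_in, limit_in; simpl; unfold R_dist.
  intros eps He. destruct (Hc eps He) as [d [Hd Hd']].
  exists d; split; [exact Hd|].
  intros y [_ Hy]. unfold ext. rewrite (cl_id 0 1 x) by lra.
  pose proof (cl_in 0 1 y ltac:(lra)).
  apply Hd'; [lra|].
  eapply Rle_lt_trans; [|exact Hy].
  pose proof (cl_lip 0 1 x y ltac:(lra)). rewrite (cl_id 0 1 x) in H0 by lra. exact H0.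
Qed.

Lemma pt_cont01 f x : 0 <= x <= 1 -> continuity_pt (ext f 0 1) x -> cont01_at f x.
Proof.
  intros Hx Hc eps He.
  unfold continuity_pt, continue_in, limit1_in, limit_in in Hc; simpl in Hc; unfold R_dist in Hc.
  destruct (Hc eps He) as [d [Hd Hd']].
  exists d; split; [exact Hd|].
  intros y Hy Hyx.
  destruct (Req_dec x y) as [<-|Hne].
  { replace (f x - f x) with 0 by ring; rewrite Rabs_R0; lra. }
  assert (H := Hd' y (conj (conj I Hne) Hyx)). unfold ext in H. rewrite !cl_id in H by lra. exact H.
Qed.

Lemma cont01_minus f g x : 0 <= x <= 1 -> cont01_at f x -> cont01_at g x ->
  cont01_at (fun s => f s - g s) x.
Proof.
  intros Hx Hf Hg. apply pt_cont01; [exact Hx|].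
  apply (continuity_pt_minus (ext f 0 1) (ext g 0 1)); apply cont01_pt; auto.
Qed.

Lemma cont01_comp (phi : R -> R) f x : 0 <= x <= 1 -> continuity phi -> cont01_at f x ->
  cont01_at (fun s => phi (f s)) x.
Proof.
  intros Hx Hp Hf. apply pt_cont01; [exact Hx|].
  apply (continuity_pt_comp (ext f 0 1) phi); [apply cont01_pt; auto| apply Hp].
Qed.

Lemma cont_pow n : continuity (fun y => y ^ n).
Proof. apply derivable_continuous, derivable_pow. Qed.

Lemma cont_opp_pow n : continuity (fun y => (- y) ^ n).
Proof.
  intro x. apply (continuity_pt_comp Ropp (fun y => y ^ n)).
  - apply continuity_pt_opp. apply derivable_continuous_pt, derivable_pt_id.
  - apply cont_pow.
Qed.

Lemma cont_scal a : continuity (fun y => a * y).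
Proof.
  intro x. apply (continuity_pt_scal id). apply derivable_continuous_pt, derivable_pt_id.
Qed.

Lemma deriv01_cont f x l : 0 <= x <= 1 -> deriv01_at f x l -> cont01_at f x.
Proof.
  intros Hx Hd eps He.
  destruct (Hd 1 Rlt_0_1) as [d [Hdp Hd']].
  set (K := 1 + Rabs l).
  assert (HK : 0 < K) by (unfold K; pose proof (Rabs_pos l); lra).
  exists (Rmin d (eps / K)); split.
  { apply Rmin_pos; [lra| apply Rdiv_lt_0_compat; lra]. }
  intros y Hy Hyx.
  destruct (Req_dec y x) as [->|Hne].
  { replace (f x - f x) with 0 by ring; rewrite Rabs_R0; lra. }
  set (h := y - x).
  assert (Hh : h <> 0) by (unfold h; lra).
  assert (Hha : Rabs h < d) by (eapply Rlt_le_trans; [exact Hyx| apply Rmin_l]).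
  assert (Hhb : Rabs h < eps / K) by (eapply Rlt_le_trans; [exact Hyx| apply Rmin_r]).
  assert (Hin : 0 <= x + h <= 1) by (unfold h; lra).
  specialize (Hd' h Hh Hha Hin).
  replace (x + h) with y in Hd' by (unfold h; ring).
  assert (Habs : Rabs ((f y - f x) / h) < K).
  { unfold K. replace ((f y - f x) / h) with (((f y - f x) / h - l) + l) by ring.
    eapply Rle_lt_trans; [apply Rabs_triang|]. lra. }
  replace (f y - f x) with (((f y - f x) / h) * h) by (field; exact Hh).
  rewrite Rabs_mult.
  assert (0 < Rabs h) by (apply Rabs_pos_lt; exact Hh).
  apply Rle_lt_trans with (K * Rabs h).
  - apply Rmult_le_compat_r; lra.
  - apply Rlt_le_trans with (K * (eps / K)).
    + apply Rmult_lt_compat_l; lra.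
    + right; field; lra.
Qed.

Lemma deriv01_int f x l : 0 < x < 1 -> deriv01_at f x l -> derivable_pt_lim f x l.
Proof.
  intros Hx Hd eps He.
  destruct (Hd eps He) as [d [Hdp Hd']].
  assert (Hm : 0 < Rmin d (Rmin x (1 - x))) by (repeat apply Rmin_pos; lra).
  exists (mkposreal _ Hm). intros h Hh Hha; simpl in Hha.
  pose proof (Rmin_l d (Rmin x (1-x))). pose proof (Rmin_r d (Rmin x (1-x))).
  pose proof (Rmin_l x (1-x)). pose proof (Rmin_r x (1-x)).
  apply Hd'; [exact Hh| lra |].
  unfold Rabs in Hha; destruct Rcase_abs in Hha; lra.
Qed.


Lemma pow_strict x y n : 0 <= x < y -> (1 <= n)%nat -> x ^ n < y ^ n.
Proof.
  intros Hxy Hn. induction n as [|n IH]; [lia|].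
  destruct n as [|n].
  - simpl; lra.
  - assert (IH' : x ^ S n < y ^ S n) by (apply IH; lia).
    change (x * x ^ S n < y * y ^ S n).
    pose proof (pow_le x (S n) ltac:(lra)).
    apply Rle_lt_trans with (x * y ^ S n).
    + apply Rmult_le_compat_l; lra.
    + apply Rmult_lt_compat_r; [lra|lra].
Qed.

Lemma pow_root_le x b n : 0 <= x -> 0 <= b -> (1 <= n)%nat -> x ^ n <= b ^ n -> x <= b.
Proof.
  intros Hx Hb Hn H. destruct (Rle_lt_dec x b) as [|Hlt]; [assumption|].
  pose proof (pow_strict b x n ltac:(lra) Hn). lra.
Qed.

Lemma pow_diff_le_S n a b M : Rabs a <= M -> Rabs b <= M ->
  Rabs (a ^ S n - b ^ S n) <= INR (S n) * M ^ n * Rabs (a - b).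
Proof.
  intros Ha Hb. assert (HM : 0 <= M) by (pose proof (Rabs_pos a); lra).
  induction n as [|n IH].
  - simpl. rewrite !Rmult_1_r. lra.
  - replace (a ^ S (S n) - b ^ S (S n)) with (a * (a ^ S n - b ^ S n) + b ^ S n * (a - b))
      by (simpl; ring).
    eapply Rle_trans; [apply Rabs_triang|]. rewrite !Rabs_mult.
    rewrite <- RPow_abs.
    assert (H1 : Rabs a * Rabs (a ^ S n - b ^ S n) <= M * (INR (S n) * M ^ n * Rabs (a - b))).
    { apply Rmult_le_compat; try apply Rabs_pos; assumption. }
    assert (H2 : Rabs b ^ S n * Rabs (a - b) <= M ^ S n * Rabs (a - b)).
    { apply Rmult_le_compat_r; [apply Rabs_pos|]. apply pow_incr. split; [apply Rabs_pos|assumption]. }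
    replace (INR (S (S n)) * M ^ S n * Rabs (a - b)) with
      (M * (INR (S n) * M ^ n * Rabs (a - b)) + M ^ S n * Rabs (a - b))
      by (rewrite (S_INR (S n)); simpl; ring).
    lra.
Qed.

Lemma pow_diff_le n a b M : Rabs a <= M -> Rabs b <= M ->
  Rabs (a ^ n - b ^ n) <= INR n * M ^ (n - 1) * Rabs (a - b).
Proof.
  intros Ha Hb. destruct n as [|n].
  - simpl. replace (1 - 1) with 0 by ring. rewrite Rabs_R0. lra.
  - replace (S n - 1)%nat with n by lia. apply pow_diff_le_S; assumption.
Qed.

Lemma pow_diff_ge_aux n a b m : 0 <= m -> m <= b -> b <= a ->
  INR (S n) * m ^ n * (a - b) <= a ^ S n - b ^ S n.
Proof.
  intros Hm Hb Hab. induction n as [|n IH].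
  - simpl; lra.
  - replace (a ^ S (S n) - b ^ S (S n)) with (a * (a ^ S n - b ^ S n) + b ^ S n * (a - b))
      by (simpl; ring).
    replace (INR (S (S n)) * m ^ S n * (a - b)) with
      (m * (INR (S n) * m ^ n * (a - b)) + m ^ S n * (a - b))
      by (rewrite (S_INR (S n)); simpl; ring).
    assert (0 <= INR (S n) * m ^ n * (a - b)).
    { apply Rmult_le_pos; [apply Rmult_le_pos; [apply pos_INR| apply pow_le; lra]|lra]. }
    assert (H1 : m * (INR (S n) * m ^ n * (a - b)) <= a * (a ^ S n - b ^ S n)).
    { apply Rmult_le_compat; lra. }
    assert (H2 : m ^ S n * (a - b) <= b ^ S n * (a - b)).
    { apply Rmult_le_compat_r; [lra|]. apply pow_incr; lra. }
    lra.
Qed.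

Lemma pow_diff_ge n a b m : 0 <= m -> m <= a -> m <= b ->
  INR n * m ^ (n - 1) * Rabs (a - b) <= Rabs (a ^ n - b ^ n).
Proof.
  intros Hm Ha Hb. destruct n as [|n].
  - simpl. rewrite Rmult_0_l, Rmult_0_l. apply Rabs_pos.
  - replace (S n - 1)%nat with n by lia.
    destruct (Rle_lt_dec b a) as [Hab|Hab].
    + pose proof (pow_diff_ge_aux n a b m Hm Hb Hab).
      rewrite (Rabs_right (a - b)) by lra.
      rewrite Rabs_right; [lra|].
      assert (0 <= INR (S n) * m ^ n * (a - b)).
      { apply Rmult_le_pos; [apply Rmult_le_pos; [apply pos_INR| apply pow_le; lra]|lra]. }
      lra.
    + pose proof (pow_diff_ge_aux n b a m Hm Ha ltac:(lra)).
      rewrite (Rabs_left1 (a - b)) by lra.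
      assert (0 <= INR (S n) * m ^ n * (b - a)).
      { apply Rmult_le_pos; [apply Rmult_le_pos; [apply pos_INR| apply pow_le; lra]|lra]. }
      rewrite Rabs_left1; lra.
Qed.

Lemma pow_even_nonneg x n : Nat.Even n -> 0 <= x ^ n.
Proof.
  intros [k ->]. rewrite pow_mult. apply pow_le.
  simpl. rewrite Rmult_1_r. apply Rle_0_sqr.
Qed.

Lemma pow_odd_neg x n : Nat.Odd n -> x < 0 -> x ^ n < 0.
Proof.
  intros [k ->] Hx. rewrite pow_add, pow_mult. simpl.
  assert (0 < (x * (x * 1)) ^ k) by (apply pow_lt; nra).
  nra.
Qed.

Lemma pow0_N n : (1 <= n)%nat -> 0 ^ n = 0.
Proof. intros. destruct n; [lia|]. simpl; ring. Qed.


Definition Psol (N : nat) (lam : R) (w w1 : R -> R) : Prop :=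
  (forall x, 0 <= x <= 1 -> deriv01_at w x (w1 x)) /\
  (forall x, 0 <= x <= 1 -> cont01_at w1 x) /\
  (forall r, 0 < r < 1 -> derivable_pt_lim (fun s => (- w1 s) ^ N) r
       (lam ^ N * INR N * r ^ (N - 1) * (w r) ^ N)) /\
  w1 0 = 0.

Lemma Psol_of N lam v v1 v2 : C2_01 v v1 v2 -> solves_B2 N lam v v1 -> Psol N lam v v1.
Proof.
  intros [H1 [H2 H3]] [S1 [S2 S3]]. repeat split; auto.
  intros x Hx. apply (deriv01_cont v1 x (v2 x) Hx). apply H2; exact Hx.
Qed.


Lemma P_cw N lam w w1 (HP : Psol N lam w w1) x : 0 <= x <= 1 -> cont01_at w x.
Proof. intros Hx. destruct HP as [H _]. apply (deriv01_cont w x (w1 x) Hx (H x Hx)). Qed.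

Lemma P_cw1 N lam w w1 (HP : Psol N lam w w1) x : 0 <= x <= 1 -> cont01_at w1 x.
Proof. intros Hx. destruct HP as [_ [H _]]. auto. Qed.

Lemma P_dw N lam w w1 (HP : Psol N lam w w1) x : 0 < x < 1 -> derivable_pt_lim w x (w1 x).
Proof. intros Hx. destruct HP as [H _]. apply deriv01_int; [exact Hx|]. apply H; lra. Qed.

Lemma P_dF N lam w w1 (HP : Psol N lam w w1) x : 0 < x < 1 -> derivable_pt_lim (fun s => (- w1 s) ^ N) x
       (lam ^ N * INR N * x ^ (N - 1) * (w x) ^ N).
Proof. intros Hx. destruct HP as [_ [_ [H _]]]. auto. Qed.

Lemma P_cF N lam w w1 (HP : Psol N lam w w1) x : 0 <= x <= 1 -> cont01_at (fun s => (- w1 s) ^ N) x.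
Proof. intros Hx. apply (cont01_comp (fun y => (- y) ^ N) w1 x Hx (cont_opp_pow N)). apply (P_cw1 N lam w w1 HP); exact Hx. Qed.

Lemma P_w10 N lam w w1 (HP : Psol N lam w w1) : w1 0 = 0.
Proof. destruct HP as [_ [_ [_ H]]]. exact H. Qed.


Lemma deriv_ext f g x l : (forall y, f y = g y) -> derivable_pt_lim f x l -> derivable_pt_lim g x l.
Proof. intros H. apply (deriv_local f g x l 1 Rlt_0_1). intros; auto. Qed.

Lemma deriv_val f x l l' : l = l' -> derivable_pt_lim f x l -> derivable_pt_lim f x l'.
Proof. intros ->; auto. Qed.

Lemma P_hom N lam w w1 a : Psol N lam w w1 ->
  Psol N lam (fun x => a * w x) (fun x => a * w1 x).
Proof.
  intros HP. pose proof HP as [H1 [H2 [H3 H4]]]. repeat split.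
  - intros x Hx eps He.
    destruct (H1 x Hx (eps / (Rabs a + 1))) as [d [Hd Hd']].
    { apply Rdiv_lt_0_compat; [lra| pose proof (Rabs_pos a); lra]. }
    exists d; split; [exact Hd|]. intros h Hh Hha Hin.
    specialize (Hd' h Hh Hha Hin).
    replace ((a * w (x + h) - a * w x) / h - a * w1 x) with
      (a * ((w (x + h) - w x) / h - w1 x)) by (field; exact Hh).
    rewrite Rabs_mult. pose proof (Rabs_pos a).
    pose proof (Rabs_pos ((w (x + h) - w x) / h - w1 x)).
    apply Rle_lt_trans with ((Rabs a + 1) * Rabs ((w (x + h) - w x) / h - w1 x)); [nra|].
    apply Rlt_le_trans with ((Rabs a + 1) * (eps / (Rabs a + 1))).
    + apply Rmult_lt_compat_l; lra.
    + right; field; lra.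
  - intros x Hx. apply (cont01_comp (fun y => a * y) w1 x Hx (cont_scal a)). auto.
  - intros r Hr.
    apply (deriv_ext (fun s => a ^ N * (- w1 s) ^ N)).
    { intros y. rewrite <- Rpow_mult_distr. f_equal; ring. }
    apply (deriv_val _ _ (a ^ N * (lam ^ N * INR N * r ^ (N - 1) * w r ^ N))).
    { rewrite Rpow_mult_distr. ring. }
    apply (derivable_pt_lim_scal (fun s => (- w1 s) ^ N)). auto.
  - rewrite H4; ring.
Qed.

Lemma cont01_dil f c x : 0 < c <= 1 -> 0 <= x <= 1 -> cont01_at f (c * x) ->
  cont01_at (fun r => f (c * r)) x.
Proof.
  intros Hc Hx Hf eps He. destruct (Hf eps He) as [d [Hd Hd']].
  exists (d / c); split; [apply Rdiv_lt_0_compat; lra|].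
  intros y Hy Hyx. apply Hd'; [nra|].
  replace (c * y - c * x) with (c * (y - x)) by ring.
  rewrite Rabs_mult, Rabs_right by lra.
  apply Rlt_le_trans with (c * (d / c)); [apply Rmult_lt_compat_l; lra| right; field; lra].
Qed.

Lemma P_dil N lam w w1 c : 0 < c <= 1 -> Psol N lam w w1 ->
  Psol N (c * c * lam) (fun r => w (c * r)) (fun r => c * w1 (c * r)).
Proof.
  intros Hc HP. pose proof HP as [H1 [H2 [H3 H4]]]. repeat split.
  - intros x Hx eps He.
    assert (Hcx : 0 <= c * x <= 1) by nra.
    destruct (H1 (c * x) Hcx (eps / c)) as [d [Hd Hd']].
    { apply Rdiv_lt_0_compat; lra. }
    exists (d / c); split; [apply Rdiv_lt_0_compat; lra|].
    intros h Hh Hha Hin.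
    assert (Hch : c * h <> 0) by (apply Rmult_integral_contrapositive; split; lra).
    assert (Hcha : Rabs (c * h) < d).
    { rewrite Rabs_mult, (Rabs_right c) by lra.
      apply Rlt_le_trans with (c * (d / c)); [apply Rmult_lt_compat_l; lra| right; field; lra]. }
    assert (Hin' : 0 <= c * x + c * h <= 1) by nra.
    specialize (Hd' (c * h) Hch Hcha Hin').
    replace ((w (c * (x + h)) - w (c * x)) / h - c * w1 (c * x)) with
      (c * ((w (c * x + c * h) - w (c * x)) / (c * h) - w1 (c * x)))
      by (replace (c * (x + h)) with (c * x + c * h) by ring; field; split; lra).
    rewrite Rabs_mult, (Rabs_right c) by lra.
    apply Rlt_le_trans with (c * (eps / c)); [apply Rmult_lt_compat_l; lra| right; field; lra].
  - intros x Hx.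
    apply (cont01_comp (fun y => c * y) (fun r => w1 (c * r)) x Hx (cont_scal c)).
    apply cont01_dil; auto. apply H2; nra.
  - intros r Hr.
    assert (Hcr : 0 < c * r < 1) by nra.
    apply (deriv_ext (fun s => c ^ N * ((fun s => (- w1 s) ^ N) (c * s)))).
    { intros y. rewrite <- Rpow_mult_distr. f_equal; ring. }
    apply (deriv_val _ _ (c ^ N * ((lam ^ N * INR N * (c * r) ^ (N - 1) * w (c * r) ^ N) * c))).
    { destruct N as [|n]; [simpl; ring|].
      replace (S n - 1)%nat with n by lia.
      rewrite !Rpow_mult_distr. simpl. ring. }
    apply (derivable_pt_lim_scal (fun s => (fun s => (- w1 s) ^ N) (c * s))).
    apply (derivable_pt_lim_comp (fun s => c * s) (fun s => (- w1 s) ^ N) r c).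
    + apply (deriv_val _ _ (c * 1)); [ring|].
      apply (derivable_pt_lim_scal id). apply derivable_pt_lim_id.
    + apply H3; exact Hcr.
  - rewrite Rmult_0_r, H4; ring.
Qed.


Lemma cont_principle (Q : R -> Prop) :
  Q 0 ->
  (forall t, 0 < t <= 1 -> (forall r, 0 <= r < t -> Q r) -> Q t) ->
  (forall t, 0 <= t < 1 -> (forall r, 0 <= r <= t -> Q r) ->
     exists d, 0 < d /\ forall r, t <= r <= t + d -> r <= 1 -> Q r) ->
  forall r, 0 <= r <= 1 -> Q r.
Proof.
  intros H0 Hcl Hst.
  set (E := fun t => 0 <= t <= 1 /\ forall r, 0 <= r <= t -> Q r).
  assert (HE0 : E 0).
  { split; [lra|]. intros r Hr. replace r with 0 by lra. exact H0. }
  assert (Hb : bound E) by (exists 1; intros t [Ht _]; lra).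
  destruct (completeness E Hb (ex_intro _ 0 HE0)) as [s [Hs1 Hs2]].
  assert (Hs0 : 0 <= s) by (apply Hs1; exact HE0).
  assert (Hs1' : s <= 1) by (apply Hs2; intros t [Ht _]; lra).
  assert (HA : forall r, 0 <= r < s -> Q r).
  { intros r Hr. destruct (classic (Q r)) as [|HnQ]; [assumption|].
    exfalso. assert (s <= r); [|lra].
    apply Hs2. intros t [Ht Ht']. destruct (Rle_lt_dec t r) as [|Hlt]; [assumption|].
    exfalso; apply HnQ, Ht'; lra. }
  assert (HQs : Q s).
  { destruct (Req_dec s 0) as [->|Hne]; [exact H0|]. apply Hcl; [lra| exact HA]. }
  assert (HEs : E s).
  { split; [lra|]. intros r Hr. destruct (Req_dec r s) as [->|]; [exact HQs| apply HA; lra]. }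
  assert (Hs : s = 1).
  { destruct (Req_dec s 1) as [|Hne]; [assumption|]. exfalso.
    destruct (Hst s ltac:(lra) (proj2 HEs)) as [d [Hd Hd']].
    set (t' := Rmin 1 (s + d)).
    assert (Et' : E t').
    { pose proof (Rmin_l 1 (s+d)); pose proof (Rmin_r 1 (s+d)).
      split; [unfold t'; split; [apply Rmin_glb; lra| lra]|].
      intros r Hr. destruct (Rle_lt_dec r s).
      - apply (proj2 HEs); lra.
      - apply Hd'; unfold t' in *; lra. }
    pose proof (Hs1 t' Et'). unfold t' in H.
    assert (s < Rmin 1 (s + d)) by (apply Rmin_glb_lt; lra). lra. }
  subst s. intros r Hr. apply (proj2 HEs); exact Hr.
Qed.

Lemma closed_eq f g t : 0 < t <= 1 -> cont01_at f t -> cont01_at g t ->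
  (forall r, 0 <= r < t -> f r = g r) -> f t = g t.
Proof.
  intros Ht Hf Hg Heq. destruct (Req_dec (f t) (g t)) as [|Hne]; [assumption|]. exfalso.
  set (e := Rabs (f t - g t) / 2).
  assert (He : 0 < e) by (unfold e; apply Rdiv_lt_0_compat; [apply Rabs_pos_lt; lra| lra]).
  destruct (Hf e He) as [d1 [Hd1 Hd1']]. destruct (Hg e He) as [d2 [Hd2 Hd2']].
  set (r := t - Rmin t (Rmin d1 d2) / 2).
  assert (Hm : 0 < Rmin t (Rmin d1 d2)) by (repeat apply Rmin_pos; lra).
  pose proof (Rmin_l t (Rmin d1 d2)); pose proof (Rmin_r t (Rmin d1 d2)).
  pose proof (Rmin_l d1 d2); pose proof (Rmin_r d1 d2).
  assert (Hr : 0 <= r < t) by (unfold r; lra).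
  assert (Hrt : Rabs (r - t) = Rmin t (Rmin d1 d2) / 2).
  { unfold r. replace (t - Rmin t (Rmin d1 d2) / 2 - t) with (- (Rmin t (Rmin d1 d2) / 2)) by ring.
    rewrite Rabs_Ropp, Rabs_right; lra. }
  specialize (Hd1' r ltac:(lra) ltac:(lra)). specialize (Hd2' r ltac:(lra) ltac:(lra)).
  rewrite (Heq r Hr) in Hd1'.
  assert (Rabs (f t - g t) <= Rabs (g r - f t) + Rabs (g r - g t)).
  { replace (f t - g t) with (- (g r - f t) + (g r - g t)) by ring.
    eapply Rle_trans; [apply Rabs_triang|]. rewrite Rabs_Ropp; lra. }
  unfold e in *; lra.
Qed.

Lemma cont01_const c x : cont01_at (fun _ => c) x.
Proof. intros eps He. exists 1; split; [lra|]. intros. replace (c - c) with 0 by ring; rewrite Rabs_R0; lra. Qed.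

Lemma Fp_bound N lam xi y D : 0 <= lam -> 0 <= xi <= 1 -> Rabs y <= D ->
  Rabs (lam ^ N * INR N * xi ^ (N - 1) * y ^ N) <= lam ^ N * INR N * D ^ N.
Proof.
  intros Hl Hxi Hy.
  assert (HD : 0 <= D) by (pose proof (Rabs_pos y); lra).
  rewrite !Rabs_mult, <- !RPow_abs, (Rabs_right lam) by lra.
  rewrite (Rabs_right (INR N)) by (apply Rle_ge, pos_INR).
  rewrite (Rabs_right xi) by lra.
  assert (H1 : xi ^ (N - 1) <= 1) by (rewrite <- (pow1 (N - 1)); apply pow_incr; lra).
  assert (H2 : Rabs y ^ N <= D ^ N) by (apply pow_incr; split; [apply Rabs_pos| exact Hy]).
  assert (H3 : 0 <= lam ^ N * INR N) by (apply Rmult_le_pos; [apply pow_le; lra| apply pos_INR]).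
  pose proof (pow_le xi (N - 1) ltac:(lra)). pose proof (pow_le (Rabs y) N (Rabs_pos y)).
  replace (lam ^ N * INR N * D ^ N) with (lam ^ N * INR N * 1 * D ^ N) by ring.
  apply Rmult_le_compat; try nra.
Qed.

Lemma Z_lemma N lam w w1 : (1 <= N)%nat -> 0 < lam -> Psol N lam w w1 -> w 0 = 0 ->
  forall r, 0 <= r <= 1 -> w r = 0 /\ w1 r = 0.
Proof.
  intros HN Hl HP Hw0.
  apply (cont_principle (fun r => w r = 0 /\ w1 r = 0)).
  - split; [exact Hw0| exact (P_w10 _ _ _ _ HP)].
  - intros t Ht Hr. split.
    + apply (closed_eq w (fun _ => 0) t Ht); [apply (P_cw N lam w w1 HP); lra| apply cont01_const|].
      intros; apply Hr; auto.
    + apply (closed_eq w1 (fun _ => 0) t Ht); [apply (P_cw1 N lam w w1 HP); lra| apply cont01_const|].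
      intros; apply Hr; auto.
  - intros t Ht Hr. destruct (Hr t ltac:(lra)) as [Hwt Hw1t].
    set (K := lam ^ N * INR N).
    assert (HK : 0 <= K) by (unfold K; apply Rmult_le_pos; [apply pow_le; lra| apply pos_INR]).
    set (q := (1/2) ^ N).
    assert (Hq : 0 < q) by (unfold q; apply pow_lt; lra).
    set (d := Rmin 1 (q / (K + 1))).
    assert (Hd : 0 < d) by (unfold d; apply Rmin_pos; [lra| apply Rdiv_lt_0_compat; lra]).
    assert (Hd1 : d <= 1) by apply Rmin_l.
    assert (HKd : K * d <= q).
    { assert (d <= q / (K + 1)) by apply Rmin_r.
      apply Rle_trans with (K * (q / (K + 1))); [apply Rmult_le_compat_l; lra|].
      apply Rle_trans with ((K + 1) * (q / (K + 1))); [apply Rmult_le_compat_r; [apply Rlt_le, Rdiv_lt_0_compat; lra| lra]|].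
      right; field; lra. }
    exists d; split; [exact Hd|].
    set (b := Rmin 1 (t + d)).
    assert (Hb1 : b <= 1) by apply Rmin_l. assert (Hb2 : b <= t + d) by apply Rmin_r.
    assert (Htb : t < b) by (apply Rmin_glb_lt; lra).
    destruct (evt01 (fun x => Rabs (w x)) t b ltac:(lra) ltac:(lra) Hb1) as [m [Hm Hm']].
    { intros x Hx. apply (cont01_comp Rabs w x ltac:(lra) Rcontinuity_abs). apply (P_cw N lam w w1 HP); lra. }
    set (D := Rabs (w m)).
    assert (HD : 0 <= D) by apply Rabs_pos.
    assert (Hw1b : forall r, t <= r <= b -> Rabs (w1 r) <= D / 2).
    { intros r Hr'. destruct (Req_dec r t) as [->|Hne].
      { rewrite Hw1t, Rabs_R0; lra. }
      destruct (mvt01 (fun s => (- w1 s) ^ N) (fun s => lam ^ N * INR N * s ^ (N - 1) * (w s) ^ N) t r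
        ltac:(lra) ltac:(lra) ltac:(lra))
        as [xi [Hxi Hxi']].
      { intros x Hx. apply (P_dF N lam w w1 HP); lra. }
      { intros x Hx. apply (P_cF N lam w w1 HP); lra. }
      simpl in Hxi'. rewrite Hw1t, Ropp_0, pow0_N in Hxi' by exact HN.
      assert (Hb' : Rabs (lam ^ N * INR N * xi ^ (N - 1) * w xi ^ N) <= K * D ^ N).
      { apply Fp_bound; [lra|lra|]. apply Hm'; lra. }
      assert (HF : Rabs (w1 r) ^ N <= (D / 2) ^ N).
      { replace (Rabs (w1 r) ^ N) with (Rabs ((- w1 r) ^ N)) by (rewrite <- RPow_abs, Rabs_Ropp; reflexivity).
        replace ((- w1 r) ^ N) with ((- w1 r) ^ N - 0) by ring. rewrite Hxi'.
        rewrite Rabs_mult, (Rabs_right (r - t)) by lra.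
        apply Rle_trans with (K * D ^ N * d).
        - apply Rmult_le_compat; try lra; apply Rabs_pos.
        - unfold Rdiv. rewrite Rpow_mult_distr. fold q.
          replace ((/ 2) ^ N) with q by (unfold q; f_equal; field).
          pose proof (pow_le D N HD). nra. }
      apply (pow_root_le _ _ N (Rabs_pos _)); [lra| exact HN| exact HF]. }
    assert (Hwb : forall r, t <= r <= b -> Rabs (w r) <= D / 2).
    { intros r Hr'. destruct (Req_dec r t) as [->|Hne].
      { rewrite Hwt, Rabs_R0; lra. }
      destruct (mvt01 w w1 t r ltac:(lra) ltac:(lra) ltac:(lra)) as [xi [Hxi Hxi']].
      { intros x Hx. apply (P_dw N lam w w1 HP); lra. }
      { intros x Hx. apply (P_cw N lam w w1 HP); lra. }
      replace (w r) with (w r - w t) by (rewrite Hwt; ring). rewrite Hxi', Rabs_mult.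
      rewrite (Rabs_right (r - t)) by lra.
      assert (Rabs (w1 xi) <= D / 2) by (apply Hw1b; lra).
      pose proof (Rabs_pos (w1 xi)). nra. }
    assert (HD0 : D = 0) by (pose proof (Hwb m Hm); fold D in H; lra).
    intros r Hr1 Hr2.
    assert (Hrb : t <= r <= b) by (split; [lra| apply Rmin_glb; lra]).
    split.
    + pose proof (Hwb r Hrb). rewrite HD0 in H. destruct (Req_dec (w r) 0) as [|Hn]; [assumption|]; pose proof (Rabs_pos_lt _ Hn); lra.
    + pose proof (Hw1b r Hrb). rewrite HD0 in H. destruct (Req_dec (w1 r) 0) as [|Hn]; [assumption|]; pose proof (Rabs_pos_lt _ Hn); lra.
Qed.


Lemma Fp_nonneg N lam x y : 0 < lam -> 0 <= x -> 0 <= y ^ N ->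
  0 <= lam ^ N * INR N * x ^ (N - 1) * y ^ N.
Proof.
  intros. repeat apply Rmult_le_pos; auto; try apply pow_le; try lra. apply pos_INR.
Qed.

Lemma F_pos N lam w w1 r : (1 <= N)%nat -> 0 < lam -> Psol N lam w w1 -> 0 < r <= 1 ->
  (forall x, 0 < x < r -> 0 < w x) -> 0 < (- w1 r) ^ N.
Proof.
  intros HN Hl HP Hr Hw.
  destruct (mvt01 (fun s => (- w1 s) ^ N) (fun s => lam ^ N * INR N * s ^ (N - 1) * (w s) ^ N) 0 r
     ltac:(lra) ltac:(lra) ltac:(lra)) as [xi [Hxi Hxi']].
  { intros x Hx. apply (P_dF N lam w w1 HP); lra. }
  { intros x Hx. apply (P_cF N lam w w1 HP); lra. }
  simpl in Hxi'. rewrite (P_w10 _ _ _ _ HP), Ropp_0, pow0_N in Hxi' by exact HN.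
  assert (0 < lam ^ N * INR N * xi ^ (N - 1) * w xi ^ N).
  { repeat apply Rmult_lt_0_compat; try apply pow_lt; try lra.
    - apply lt_0_INR; lia.
    - apply Hw; lra. }
  assert (0 < (- w1 r) ^ N - 0) by (rewrite Hxi'; apply Rmult_lt_0_compat; lra). lra.
Qed.

Lemma sign_const g b : 0 < b <= 1 -> (forall x, 0 <= x <= 1 -> cont01_at g x) ->
  (forall x, 0 < x <= b -> g x <> 0) -> forall x y, 0 < x <= b -> 0 < y <= b -> 0 < g x * g y.
Proof.
  intros Hb Hc Hnz x y Hx Hy.
  destruct (Rlt_le_dec 0 (g x * g y)) as [|Hle]; [assumption|]. exfalso.
  destruct (Rle_lt_dec x y) as [Hxy|Hxy].
  - destruct (ivt01 g x y ltac:(lra) Hxy ltac:(lra)) as [z [Hz Hz']].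
    { intros; apply Hc; lra. } { exact Hle. }
    apply (Hnz z); [lra| exact Hz'].
  - destruct (ivt01 g y x ltac:(lra) ltac:(lra) ltac:(lra)) as [z [Hz Hz']].
    { intros; apply Hc; lra. } { rewrite Rmult_comm; exact Hle. }
    apply (Hnz z); [lra| exact Hz'].
Qed.



Lemma F_nz_w1 N x : (1 <= N)%nat -> 0 < (- x) ^ N -> x <> 0.
Proof.
  intros HN H ->. rewrite Ropp_0, pow0_N in H by exact HN. lra.
Qed.

Lemma init_sign N lam w w1 : (1 <= N)%nat -> 0 < lam -> Psol N lam w w1 -> 0 < w 0 -> w 1 = 0 ->
  exists b, 0 < b <= 1 /\ forall r, 0 < r <= b -> 0 < - w1 r.
Proof.
  intros HN Hl HP Hw0 Hw1.
  destruct (P_cw N lam w w1 HP 0 ltac:(lra) (w 0 / 2) ltac:(lra)) as [d [Hd Hd']].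
  set (b := Rmin 1 (d / 2)).
  assert (Hb : 0 < b <= 1) by (unfold b; split; [apply Rmin_pos; lra| apply Rmin_l]).
  assert (Hbd : b <= d / 2) by apply Rmin_r.
  assert (Hwp : forall x, 0 <= x <= b -> 0 < w x).
  { intros x Hx. assert (Rabs (w x - w 0) < w 0 / 2).
    { apply Hd'; [lra|]. rewrite Rminus_0_r, Rabs_right; lra. }
    unfold Rabs in H; destruct Rcase_abs in H; lra. }
  assert (HF : forall r, 0 < r <= b -> 0 < (- w1 r) ^ N).
  { intros r Hr. apply (F_pos N lam w w1 r HN Hl HP); [lra|]. intros; apply Hwp; lra. }
  assert (Hnz : forall r, 0 < r <= b -> w1 r <> 0).
  { intros r Hr. apply (F_nz_w1 N _ HN), HF, Hr. }
  pose proof (sign_const w1 b Hb (P_cw1 N lam w w1 HP) Hnz) as Hsc.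
  destruct (Rlt_le_dec (w1 b) 0) as [Hneg|Hpos].
  - exists b; split; [exact Hb|]. intros r Hr.
    specialize (Hsc r b Hr ltac:(lra)).
    destruct (Rlt_le_dec (w1 r) 0); [lra|]. nra.
  - exfalso. assert (Hpos' : 0 < w1 b) by (destruct Hpos; [assumption| exfalso; apply (Hnz b); lra]).
    destruct (Nat.Even_or_Odd N) as [Hev|Hod].
    + (* even: w1 stays positive on (0,1] *)
      assert (Hnz1 : forall r, 0 < r <= 1 -> w1 r <> 0).
      { intros r Hr. destruct (Rle_lt_dec r b) as [|Hrb]; [apply Hnz; lra|].
        apply (F_nz_w1 N _ HN).
        destruct (mvt01 (fun s => (- w1 s) ^ N) (fun s => lam ^ N * INR N * s ^ (N - 1) * (w s) ^ N) b r
          ltac:(lra) ltac:(lra) ltac:(lra)) as [xi [Hxi Hxi']].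
        { intros x Hx. apply (P_dF N lam w w1 HP); lra. }
        { intros x Hx. apply (P_cF N lam w w1 HP); lra. }
        simpl in Hxi'.
        assert (0 <= lam ^ N * INR N * xi ^ (N - 1) * w xi ^ N)
          by (apply Fp_nonneg; [lra|lra| apply pow_even_nonneg; exact Hev]).
        assert (0 <= (- w1 r) ^ N - (- w1 b) ^ N) by (rewrite Hxi'; apply Rmult_le_pos; lra).
        pose proof (HF b ltac:(lra)). lra. }
      pose proof (sign_const w1 1 ltac:(lra) (P_cw1 N lam w w1 HP) Hnz1) as Hsc1.
      destruct (mvt01 w w1 0 1 ltac:(lra) ltac:(lra) ltac:(lra)) as [xi [Hxi Hxi']].
      { intros x Hx. apply (P_dw N lam w w1 HP); lra. }
      { intros x Hx. apply (P_cw N lam w w1 HP); lra. }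
      specialize (Hsc1 xi b ltac:(lra) ltac:(lra)).
      assert (0 < w1 xi) by (destruct (Rlt_le_dec 0 (w1 xi)); [assumption| nra]).
      rewrite Hw1 in Hxi'. nra.
    + pose proof (pow_odd_neg (- w1 b) N Hod ltac:(lra)).
      pose proof (HF b ltac:(lra)). lra.
Qed.

Lemma pos_eig N lam v v1 : (1 <= N)%nat -> 0 < lam -> Psol N lam v v1 -> 0 < v 0 -> v 1 = 0 ->
  (forall x, 0 < x < 1 -> 0 < v x) -> forall r, 0 < r <= 1 -> 0 < - v1 r.
Proof.
  intros HN Hl HP Hv0 Hv1 Hpos r Hr.
  destruct (init_sign N lam v v1 HN Hl HP Hv0 Hv1) as [b [Hb Hb']].
  assert (Hnz : forall x, 0 < x <= 1 -> v1 x <> 0).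
  { intros x Hx. apply (F_nz_w1 N _ HN). apply (F_pos N lam v v1 x HN Hl HP Hx).
    intros; apply Hpos; lra. }
  pose proof (sign_const v1 1 ltac:(lra) (P_cw1 N lam v v1 HP) Hnz r b Hr ltac:(lra)).
  specialize (Hb' b ltac:(lra)). nra.
Qed.


Lemma Rabs_zero x : Rabs x <= 0 -> x = 0.
Proof. intros H. destruct (Req_dec x 0) as [|Hn]; [assumption|]. pose proof (Rabs_pos_lt _ Hn). lra. Qed.


Lemma dD N mu u u1 w w1 (HPu : Psol N mu u u1) (HPw : Psol N mu w w1) x : 0 < x < 1 -> derivable_pt_lim (fun s => w s - u s) x (w1 x - u1 x).
Proof.
  intros Hx. apply (derivable_pt_lim_minus w u); [apply (P_dw N mu w w1 HPw)| apply (P_dw N mu u u1 HPu)]; exact Hx.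
Qed.

Lemma cD N mu u u1 w w1 (HPu : Psol N mu u u1) (HPw : Psol N mu w w1) x : 0 <= x <= 1 -> cont01_at (fun s => w s - u s) x.
Proof. intros Hx. apply cont01_minus; [exact Hx| apply (P_cw N mu w w1 HPw)| apply (P_cw N mu u u1 HPu)]; exact Hx. Qed.

Lemma core N mu u u1 w w1 (HPu : Psol N mu u u1) (HPw : Psol N mu w w1) a b K : 0 <= a -> a < b -> b <= 1 -> w a = u a -> w1 a = u1 a -> 0 <= K ->
  K * (b - a) <= 1 / 2 ->
  (forall E, 0 <= E -> (forall y, a <= y <= b -> Rabs (w y - u y) <= E) ->
     forall x, a < x <= b -> Rabs (w1 x - u1 x) <= K * E) ->
  forall x, a <= x <= b -> w x = u x /\ w1 x = u1 x.
Proof.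
  intros Ha Hab Hb Hwa Hw1a HK HKb Hc.
  destruct (evt01 (fun y => Rabs (w y - u y)) a b Ha ltac:(lra) Hb) as [m [Hm Hm']].
  { intros x Hx. apply (cont01_comp Rabs (fun s => w s - u s) x ltac:(lra) Rcontinuity_abs). apply (cD N mu u u1 w w1 HPu HPw); lra. }
  set (E := Rabs (w m - u m)).
  assert (HE : 0 <= E) by apply Rabs_pos.
  assert (H1 := Hc E HE Hm').
  assert (H2 : forall r, a <= r <= b -> Rabs (w r - u r) <= E / 2).
  { intros r Hr. destruct (Req_dec r a) as [->|Hne].
    { rewrite Hwa. replace (u a - u a) with 0 by ring. rewrite Rabs_R0; lra. }
    destruct (mvt01 (fun s => w s - u s) (fun s => w1 s - u1 s) a r ltac:(lra) ltac:(lra) ltac:(lra))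
      as [xi [Hxi Hxi']].
    { intros x Hx; apply (dD N mu u u1 w w1 HPu HPw); lra. } { intros x Hx; apply (cD N mu u u1 w w1 HPu HPw); lra. }
    replace (w r - u r) with ((w r - u r) - (w a - u a)) by (rewrite Hwa; ring).
    rewrite Hxi', Rabs_mult, (Rabs_right (r - a)) by lra.
    assert (Rabs (w1 xi - u1 xi) <= K * E) by (apply H1; lra).
    pose proof (Rabs_pos (w1 xi - u1 xi)).
    apply Rle_trans with (K * E * (b - a)); [apply Rmult_le_compat; lra|].
    replace (K * E * (b - a)) with (K * (b - a) * E) by ring.
    apply Rle_trans with (1 / 2 * E); [apply Rmult_le_compat_r; lra| lra]. }
  assert (E0 : E = 0) by (pose proof (H2 m Hm); fold E in H; lra).
  intros x Hx. split.
  - pose proof (H2 x Hx). rewrite E0 in H. replace (0 / 2) with 0 in H by field. apply Rabs_zero in H; lra.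
  - destruct (Req_dec x a) as [->|Hne]; [exact Hw1a|].
    pose proof (H1 x ltac:(lra)). rewrite E0, Rmult_0_r in H. apply Rabs_zero in H; lra.
Qed.

Lemma dF_bound N mu u u1 w w1 (Hmu : 0 < mu) (HPu : Psol N mu u u1) (HPw : Psol N mu w w1) a x E M : 0 <= a -> a < x -> x <= 1 -> w1 a = u1 a ->
  (forall y, a <= y <= x -> Rabs (w y - u y) <= E) ->
  (forall y, 0 <= y <= 1 -> Rabs (w y) <= M /\ Rabs (u y) <= M) ->
  exists xi, a < xi < x /\
    Rabs ((- w1 x) ^ N - (- u1 x) ^ N) <=
      mu ^ N * INR N * xi ^ (N - 1) * (INR N * M ^ (N - 1) * E) * (x - a).
Proof.
  intros Ha Hax Hx Hw1a HE HM.
  destruct (mvt01 (fun s => (- w1 s) ^ N - (- u1 s) ^ N)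
     (fun s => mu ^ N * INR N * s ^ (N - 1) * (w s) ^ N - mu ^ N * INR N * s ^ (N - 1) * (u s) ^ N)
     a x Ha Hax Hx) as [xi [Hxi Hxi']].
  { intros y Hy. apply (derivable_pt_lim_minus (fun s => (- w1 s) ^ N) (fun s => (- u1 s) ^ N));
    [apply (P_dF N mu w w1 HPw)| apply (P_dF N mu u u1 HPu)]; lra. }
  { intros y Hy. apply cont01_minus; [lra| apply (P_cF N mu w w1 HPw)| apply (P_cF N mu u u1 HPu)]; lra. }
  exists xi; split; [exact Hxi|].
  rewrite Hw1a in Hxi'. replace ((- u1 a) ^ N - (- u1 a) ^ N) with 0 in Hxi' by ring.
  rewrite Rminus_0_r in Hxi'. rewrite Hxi'.
  replace (mu ^ N * INR N * xi ^ (N - 1) * w xi ^ N - mu ^ N * INR N * xi ^ (N - 1) * u xi ^ N)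
    with (mu ^ N * INR N * xi ^ (N - 1) * (w xi ^ N - u xi ^ N)) by ring.
  assert (Hc : 0 <= mu ^ N * INR N * xi ^ (N - 1)).
  { repeat apply Rmult_le_pos; try apply pow_le; try lra. apply pos_INR. }
  rewrite Rabs_mult, (Rabs_right (x - a)) by lra.
  rewrite Rabs_mult, (Rabs_right (mu ^ N * INR N * xi ^ (N - 1))) by lra.
  apply Rmult_le_compat_r; [lra|]. apply Rmult_le_compat_l; [exact Hc|].
  destruct (HM xi ltac:(lra)) as [Hw Hu].
  eapply Rle_trans; [apply (pow_diff_le N _ _ M Hw Hu)|].
  apply Rmult_le_compat_l.
  - apply Rmult_le_pos; [apply pos_INR| apply pow_le; pose proof (Rabs_pos (w xi)); lra].
  - apply HE; lra.
Qed.

Lemma dG_bound N (u1 w1 : R -> R) x m : 0 <= m -> m <= - w1 x -> m <= - u1 x ->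
  INR N * m ^ (N - 1) * Rabs (w1 x - u1 x) <= Rabs ((- w1 x) ^ N - (- u1 x) ^ N).
Proof.
  intros Hm Hw Hu. replace (w1 x - u1 x) with (- ((- w1 x) - (- u1 x))) by ring.
  rewrite Rabs_Ropp. apply pow_diff_ge; assumption.
Qed.



Lemma cont01_id x : cont01_at (fun s => s) x.
Proof. intros eps He. exists eps; split; [lra|]. intros; assumption. Qed.

Lemma F_lower N mu w w1 k d : (1 <= N)%nat -> 0 < mu -> Psol N mu w w1 -> 0 < d <= 1 -> 0 <= k ->
  (forall x, 0 <= x <= d -> k <= mu * w x) ->
  forall r, 0 <= r <= d -> (k * r) ^ N <= (- w1 r) ^ N.
Proof.
  intros HN Hmu HP Hd Hk Hkw r Hr.
  destruct (Req_dec r 0) as [->|Hne].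
  { rewrite Rmult_0_r, (P_w10 _ _ _ _ HP), Ropp_0. lra. }
  destruct (mvt01 (fun s => (- w1 s) ^ N - k ^ N * s ^ N)
    (fun s => mu ^ N * INR N * s ^ (N - 1) * (w s) ^ N - k ^ N * (INR N * s ^ Nat.pred N)) 0 r
    ltac:(lra) ltac:(lra) ltac:(lra)) as [xi [Hxi Hxi']].
  { intros x Hx. apply (derivable_pt_lim_minus (fun s => (- w1 s) ^ N) (fun s => k ^ N * s ^ N)).
    - apply (P_dF N mu w w1 HP); lra.
    - apply (derivable_pt_lim_scal (fun s => s ^ N)). apply derivable_pt_lim_pow. }
  { intros x Hx. apply cont01_minus; [lra| apply (P_cF N mu w w1 HP); lra|].
    apply (cont01_comp (fun y => k ^ N * y ^ N) (fun s => s) x ltac:(lra)); [|apply cont01_id].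
    intro y. apply (continuity_pt_scal (fun y => y ^ N)). apply cont_pow. }
  rewrite (P_w10 _ _ _ _ HP), Ropp_0, !pow0_N in Hxi' by exact HN.
  rewrite <- Nat.sub_1_r in Hxi'.
  assert (Hmw : k ^ N <= (mu * w xi) ^ N) by (apply pow_incr; split; [lra| apply Hkw; lra]).
  rewrite Rpow_mult_distr in Hmw.
  assert (0 <= INR N * xi ^ (N - 1)) by (apply Rmult_le_pos; [apply pos_INR| apply pow_le; lra]).
  assert (Hpos : 0 <= mu ^ N * INR N * xi ^ (N - 1) * w xi ^ N - k ^ N * (INR N * xi ^ (N - 1))).
  { replace (mu ^ N * INR N * xi ^ (N - 1) * w xi ^ N - k ^ N * (INR N * xi ^ (N - 1)))
      with ((INR N * xi ^ (N - 1)) * (mu ^ N * w xi ^ N - k ^ N)) by ring.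
    apply Rmult_le_pos; lra. }
  rewrite Rpow_mult_distr.
  assert (0 <= (- w1 r) ^ N - k ^ N * r ^ N - (0 - k ^ N * 0)) by (rewrite Hxi'; apply Rmult_le_pos; lra).
  lra.
Qed.

Lemma arith_K A C1 dl : 0 < A -> 0 <= C1 -> 0 < dl <= 1 -> dl <= A / (2 * C1 + 1) ->
  C1 * dl / A * dl <= 1 / 2.
Proof.
  intros HA HC Hd Hd2.
  assert (H1 : C1 * dl <= A / 2).
  { apply Rle_trans with (C1 * (A / (2 * C1 + 1))); [apply Rmult_le_compat_l; lra|].
    apply Rmult_le_reg_l with (2 * (2 * C1 + 1)); [lra|].
    replace (2 * (2 * C1 + 1) * (C1 * (A / (2 * C1 + 1)))) with (2 * C1 * A) by (field; lra).
    nra. }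
  replace (C1 * dl / A * dl) with ((C1 * dl) * dl / A) by (field; lra).
  apply Rmult_le_reg_l with A; [lra|].
  replace (A * (C1 * dl * dl / A)) with (C1 * dl * dl) by (field; lra).
  assert (0 <= C1 * dl) by nra. nra.
Qed.

Lemma divK A C1 dl E X : 0 < A -> A * X <= C1 * E * dl -> X <= C1 * dl / A * E.
Proof.
  intros HA H. apply Rmult_le_reg_l with A; [lra|].
  replace (A * (C1 * dl / A * E)) with (C1 * E * dl) by (field; lra). exact H.
Qed.

Lemma uniq N mu u u1 w w1 : (1 <= N)%nat -> 0 < mu -> Psol N mu u u1 -> Psol N mu w w1 ->
  u 0 = w 0 -> 0 < u 0 -> (forall r, 0 < r <= 1 -> 0 < - u1 r) ->
  (exists b, 0 < b <= 1 /\ forall r, 0 < r <= b -> 0 < - w1 r) ->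
  forall r, 0 <= r <= 1 -> w r = u r /\ w1 r = u1 r.
Proof.
  intros HN Hmu HPu HPw Hu0 Hpu Hu1 [bw [Hbw Hw1]].
  destruct (evt01 (fun y => Rabs (w y)) 0 1 ltac:(lra) ltac:(lra) ltac:(lra)) as [m1 [Hm1 Hm1']].
  { intros x Hx. apply (cont01_comp Rabs w x Hx Rcontinuity_abs). apply (P_cw N mu w w1 HPw); lra. }
  destruct (evt01 (fun y => Rabs (u y)) 0 1 ltac:(lra) ltac:(lra) ltac:(lra)) as [m2 [Hm2 Hm2']].
  { intros x Hx. apply (cont01_comp Rabs u x Hx Rcontinuity_abs). apply (P_cw N mu u u1 HPu); lra. }
  set (M := Rabs (w m1) + Rabs (u m2)).
  assert (HM : forall y, 0 <= y <= 1 -> Rabs (w y) <= M /\ Rabs (u y) <= M).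
  { intros y Hy. pose proof (Hm1' y Hy); pose proof (Hm2' y Hy).
    pose proof (Rabs_pos (w m1)); pose proof (Rabs_pos (u m2)). simpl in *. unfold M; lra. }
  assert (HM0 : 0 <= M) by (unfold M; pose proof (Rabs_pos (w m1)); pose proof (Rabs_pos (u m2)); lra).
  set (C1 := mu ^ N * INR N * (INR N * M ^ (N - 1))).
  assert (HC1 : 0 <= C1).
  { unfold C1. repeat apply Rmult_le_pos; try apply pow_le; try apply pos_INR; lra. }
  apply (cont_principle (fun r => w r = u r /\ w1 r = u1 r)).
  - split; [lra|]. rewrite (P_w10 _ _ _ _ HPw), (P_w10 _ _ _ _ HPu); reflexivity.
  - intros t Ht Hr. split.
    + apply (closed_eq w u t Ht); [apply (P_cw N mu w w1 HPw); lra| apply (P_cw N mu u u1 HPu); lra|].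
      intros; apply Hr; auto.
    + apply (closed_eq w1 u1 t Ht); [apply (P_cw1 N mu w w1 HPw); lra| apply (P_cw1 N mu u u1 HPu); lra|].
      intros; apply Hr; auto.
  - intros t Ht Hr. destruct (Hr t ltac:(lra)) as [Hwt Hw1t].
    destruct (Req_dec t 0) as [Ht0|Ht0].
    +
      subst t. set (al := u 0).
      destruct (P_cw N mu w w1 HPw 0 ltac:(lra) (al / 2) ltac:(unfold al; lra)) as [d1 [Hd1 Hd1']].
      destruct (P_cw N mu u u1 HPu 0 ltac:(lra) (al / 2) ltac:(unfold al; lra)) as [d2 [Hd2 Hd2']].
      set (d0 := Rmin 1 (Rmin (d1 / 2) (Rmin (d2 / 2) bw))).
      assert (Hd0 : 0 < d0 <= 1).
      { unfold d0; split; [repeat apply Rmin_pos; lra| apply Rmin_l]. }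
      assert (Hd0b : d0 <= d1 / 2 /\ d0 <= d2 / 2 /\ d0 <= bw).
      { unfold d0. pose proof (Rmin_r 1 (Rmin (d1 / 2) (Rmin (d2 / 2) bw))).
        pose proof (Rmin_l (d1 / 2) (Rmin (d2 / 2) bw)). pose proof (Rmin_r (d1 / 2) (Rmin (d2 / 2) bw)).
        pose proof (Rmin_l (d2 / 2) bw). pose proof (Rmin_r (d2 / 2) bw). lra. }
      set (k := mu * al / 2).
      assert (Hk : 0 < k) by (unfold k, al; nra).
      assert (Hwk : forall x, 0 <= x <= d0 -> k <= mu * w x).
      { intros x Hx. assert (Rabs (w x - w 0) < al / 2) by (apply Hd1'; [lra| rewrite Rminus_0_r, Rabs_right; lra]).
        unfold Rabs in H; destruct Rcase_abs in H; unfold k; fold al in Hu0; rewrite <- Hu0 in H; nra. }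
      assert (Huk : forall x, 0 <= x <= d0 -> k <= mu * u x).
      { intros x Hx. assert (Rabs (u x - u 0) < al / 2) by (apply Hd2'; [lra| rewrite Rminus_0_r, Rabs_right; lra]).
        unfold Rabs in H; destruct Rcase_abs in H; unfold k, al in *; nra. }
      assert (HGw : forall x, 0 < x <= d0 -> k * x <= - w1 x).
      { intros x Hx. apply (pow_root_le _ _ N); [nra| pose proof (Hw1 x ltac:(lra)); lra| exact HN|].
        apply (F_lower N mu w w1 k d0 HN Hmu HPw Hd0 ltac:(lra) Hwk); lra. }
      assert (HGu : forall x, 0 < x <= d0 -> k * x <= - u1 x).
      { intros x Hx. apply (pow_root_le _ _ N); [nra| pose proof (Hu1 x ltac:(lra)); lra| exact HN|].
        apply (F_lower N mu u u1 k d0 HN Hmu HPu Hd0 ltac:(lra) Huk); lra. }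
      set (A := INR N * k ^ (N - 1)).
      assert (HA : 0 < A) by (unfold A; apply Rmult_lt_0_compat; [apply lt_0_INR; lia| apply pow_lt; lra]).
      set (b := Rmin d0 (A / (2 * C1 + 1))).
      assert (Hb : 0 < b <= d0) by (unfold b; split; [apply Rmin_pos; [lra| apply Rdiv_lt_0_compat; lra]| apply Rmin_l]).
      assert (Hb2 : b <= A / (2 * C1 + 1)) by apply Rmin_r.
      assert (Hcore := core N mu u u1 w w1 HPu HPw 0 b (C1 * b / A) ltac:(lra) ltac:(lra) ltac:(lra)
        Hwt Hw1t).
      exists b; split; [lra|]. intros r Hr1 Hr2. apply Hcore; [| | |lra].
      * apply Rmult_le_pos; [apply Rmult_le_pos; lra| apply Rlt_le, Rinv_0_lt_compat; lra].
      * rewrite Rminus_0_r. apply arith_K; lra.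
      * intros E HE HEd x Hx.
        destruct (dF_bound N mu u u1 w w1 Hmu HPu HPw 0 x E M ltac:(lra) ltac:(lra) ltac:(lra) Hw1t)
          as [xi [Hxi Hxi']].
        { intros y Hy; apply HEd; lra. } { exact HM. }
        pose proof (dG_bound N u1 w1 x (k * x) ltac:(nra) (HGw x ltac:(lra)) (HGu x ltac:(lra))) as HG.
        apply (divK A C1 b E).
        { exact HA. }
        assert (Hxi1 : xi ^ (N - 1) <= x ^ (N - 1)) by (apply pow_incr; lra).
        assert (Hxp : 0 < x ^ (N - 1)) by (apply pow_lt; lra).
        rewrite Rpow_mult_distr in HG.
        apply Rmult_le_reg_l with (x ^ (N - 1)); [exact Hxp|].
        assert (HE' : 0 <= INR N * M ^ (N - 1) * E) by (apply Rmult_le_pos; [apply Rmult_le_pos; [apply pos_INR| apply pow_le; lra]| lra]).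
        assert (Hmu' : 0 <= mu ^ N * INR N) by (apply Rmult_le_pos; [apply pow_le; lra| apply pos_INR]).
        assert (Hstep : mu ^ N * INR N * xi ^ (N - 1) * (INR N * M ^ (N - 1) * E) * (x - 0)
                  <= mu ^ N * INR N * x ^ (N - 1) * (INR N * M ^ (N - 1) * E) * b).
        { apply Rmult_le_compat; try lra.
          - repeat apply Rmult_le_pos; try apply pow_le; try apply pos_INR; lra.
          - apply Rmult_le_compat_r; [exact HE'|]. apply Rmult_le_compat_l; [exact Hmu'| exact Hxi1]. }
        unfold A, C1.
        replace (x ^ (N - 1) * (INR N * k ^ (N - 1) * Rabs (w1 x - u1 x)))
          with (INR N * (k ^ (N - 1) * x ^ (N - 1)) * Rabs (w1 x - u1 x)) by ring.
        replace (x ^ (N - 1) * (mu ^ N * INR N * (INR N * M ^ (N - 1)) * E * b))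
          with (mu ^ N * INR N * x ^ (N - 1) * (INR N * M ^ (N - 1) * E) * b) by ring.
        lra.
    +
      set (g := - u1 t).
      assert (Hg : 0 < g) by (apply Hu1; lra).
      destruct (P_cw1 N mu w w1 HPw t ltac:(lra) (g / 2) ltac:(lra)) as [d1 [Hd1 Hd1']].
      destruct (P_cw1 N mu u u1 HPu t ltac:(lra) (g / 2) ltac:(lra)) as [d2 [Hd2 Hd2']].
      set (m := g / 2).
      set (A := INR N * m ^ (N - 1)).
      assert (HA : 0 < A) by (unfold A; apply Rmult_lt_0_compat; [apply lt_0_INR; lia| apply pow_lt; unfold m; lra]).
      set (dl := Rmin 1 (Rmin (d1 / 2) (Rmin (d2 / 2) (A / (2 * C1 + 1))))).
      assert (Hdl : 0 < dl <= 1).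
      { unfold dl; split; [repeat apply Rmin_pos; try lra; apply Rdiv_lt_0_compat; lra| apply Rmin_l]. }
      assert (Hdlb : dl <= d1 / 2 /\ dl <= d2 / 2 /\ dl <= A / (2 * C1 + 1)).
      { unfold dl. pose proof (Rmin_r 1 (Rmin (d1 / 2) (Rmin (d2 / 2) (A / (2 * C1 + 1))))).
        pose proof (Rmin_l (d1 / 2) (Rmin (d2 / 2) (A / (2 * C1 + 1)))).
        pose proof (Rmin_r (d1 / 2) (Rmin (d2 / 2) (A / (2 * C1 + 1)))).
        pose proof (Rmin_l (d2 / 2) (A / (2 * C1 + 1))). pose proof (Rmin_r (d2 / 2) (A / (2 * C1 + 1))). lra. }
      set (b := Rmin 1 (t + dl)).
      assert (Hb1 : b <= 1) by apply Rmin_l. assert (Hb2 : b <= t + dl) by apply Rmin_r.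
      assert (Htb : t < b) by (apply Rmin_glb_lt; lra).
      assert (HGw : forall x, t <= x <= b -> m <= - w1 x).
      { intros x Hx. assert (Rabs (w1 x - w1 t) < g / 2).
        { apply Hd1'; [lra|]. unfold Rabs; destruct Rcase_abs; lra. }
        rewrite Hw1t in H. unfold m, g in *. unfold Rabs in H; destruct Rcase_abs in H; lra. }
      assert (HGu : forall x, t <= x <= b -> m <= - u1 x).
      { intros x Hx. assert (Rabs (u1 x - u1 t) < g / 2).
        { apply Hd2'; [lra|]. unfold Rabs; destruct Rcase_abs; lra. }
        unfold m, g in *. unfold Rabs in H; destruct Rcase_abs in H; lra. }
      assert (Hcore := core N mu u u1 w w1 HPu HPw t b (C1 * dl / A) ltac:(lra) Htb Hb1 Hwt Hw1t).
      exists dl; split; [lra|]. intros r Hr1 Hr2. apply Hcore; [| | |split; [lra| apply Rmin_glb; lra]].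
      * apply Rmult_le_pos; [apply Rmult_le_pos; lra| apply Rlt_le, Rinv_0_lt_compat; lra].
      * apply Rle_trans with (C1 * dl / A * dl); [|apply arith_K; lra].
        apply Rmult_le_compat_l; [|lra].
        apply Rmult_le_pos; [apply Rmult_le_pos; lra| apply Rlt_le, Rinv_0_lt_compat; lra].
      * intros E HE HEd x Hx.
        destruct (dF_bound N mu u u1 w w1 Hmu HPu HPw t x E M ltac:(lra) ltac:(lra) ltac:(lra) Hw1t)
          as [xi [Hxi Hxi']].
        { intros y Hy; apply HEd; lra. } { exact HM. }
        pose proof (dG_bound N u1 w1 x m ltac:(unfold m; lra) (HGw x ltac:(lra)) (HGu x ltac:(lra))) as HG.
        apply (divK A C1 dl E); [exact HA|].
        assert (Hxi1 : xi ^ (N - 1) <= 1) by (rewrite <- (pow1 (N - 1)); apply pow_incr; lra).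
        assert (HE' : 0 <= INR N * M ^ (N - 1) * E) by (apply Rmult_le_pos; [apply Rmult_le_pos; [apply pos_INR| apply pow_le; lra]| lra]).
        assert (Hmu' : 0 <= mu ^ N * INR N) by (apply Rmult_le_pos; [apply pow_le; lra| apply pos_INR]).
        assert (Hstep : mu ^ N * INR N * xi ^ (N - 1) * (INR N * M ^ (N - 1) * E) * (x - t)
                  <= mu ^ N * INR N * 1 * (INR N * M ^ (N - 1) * E) * dl).
        { apply Rmult_le_compat; try lra.
          - repeat apply Rmult_le_pos; try apply pow_le; try apply pos_INR; lra.
          - apply Rmult_le_compat_r; [exact HE'|]. apply Rmult_le_compat_l; [exact Hmu'| exact Hxi1]. }
        unfold A, C1.
        replace (mu ^ N * INR N * (INR N * M ^ (N - 1)) * E * dl)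
          with (mu ^ N * INR N * 1 * (INR N * M ^ (N - 1) * E) * dl) by ring.
        lra.
Qed.


Lemma absF x N : Rabs ((- x) ^ N) = Rabs x ^ N.
Proof. rewrite <- RPow_abs, Rabs_Ropp. reflexivity. Qed.

Lemma after_zero N lam w w1 c : (1 <= N)%nat -> 0 < lam -> Psol N lam w w1 -> 0 < c < 1 ->
  w c = 0 -> w 1 = 0 -> w1 c <> 0 -> lam ^ N * INR N * (1 - c) <= 1 / 4 -> False.
Proof.
  intros HN Hl HP Hc Hwc Hw1 Hw1c Hsmall.
  set (h := 1 - c). set (K := lam ^ N * INR N).
  assert (HK : 0 <= K) by (unfold K; apply Rmult_le_pos; [apply pow_le; lra| apply pos_INR]).
  destruct (evt01 (fun y => Rabs (w y)) c 1 ltac:(lra) ltac:(lra) ltac:(lra)) as [m [Hm Hm']].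
  { intros x Hx. apply (cont01_comp Rabs w x ltac:(lra) Rcontinuity_abs). apply (P_cw N lam w w1 HP); lra. }
  destruct (evt01 (fun y => Rabs (w1 y)) c 1 ltac:(lra) ltac:(lra) ltac:(lra)) as [m' [Hm2 Hm2']].
  { intros x Hx. apply (cont01_comp Rabs w1 x ltac:(lra) Rcontinuity_abs). apply (P_cw1 N lam w w1 HP); lra. }
  simpl in Hm', Hm2'.
  set (D := Rabs (w m)). set (G := Rabs (w1 m')). set (ga := Rabs (w1 c)).
  assert (Hga : 0 < ga) by (apply Rabs_pos_lt; exact Hw1c).
  assert (HD0 : 0 <= D) by apply Rabs_pos.
  assert (HG0 : 0 <= G) by apply Rabs_pos.
  assert (H1 : forall r, c <= r <= 1 -> Rabs (w r) <= G * h).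
  { intros r Hr. destruct (Req_dec r c) as [->|Hne].
    { rewrite Hwc, Rabs_R0. apply Rmult_le_pos; unfold h; lra. }
    destruct (mvt01 w w1 c r ltac:(lra) ltac:(lra) ltac:(lra)) as [xi [Hxi Hxi']].
    { intros x Hx. apply (P_dw N lam w w1 HP); lra. }
    { intros x Hx. apply (P_cw N lam w w1 HP); lra. }
    replace (w r) with (w r - w c) by (rewrite Hwc; ring). rewrite Hxi', Rabs_mult, (Rabs_right (r - c)) by lra.
    apply Rmult_le_compat; [apply Rabs_pos| lra| apply Hm2'; lra| unfold h; lra]. }
  assert (HDG : D <= G) by (pose proof (H1 m Hm); fold D in H; unfold h in H; nra).
  assert (H2 : forall r, c <= r <= 1 -> Rabs ((- w1 r) ^ N - (- w1 c) ^ N) <= K * D ^ N * h).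
  { intros r Hr. destruct (Req_dec r c) as [->|Hne].
    { replace ((- w1 c) ^ N - (- w1 c) ^ N) with 0 by ring. rewrite Rabs_R0.
      apply Rmult_le_pos; [apply Rmult_le_pos; [lra| apply pow_le; lra]| unfold h; lra]. }
    destruct (mvt01 (fun s => (- w1 s) ^ N) (fun s => lam ^ N * INR N * s ^ (N - 1) * (w s) ^ N) c r
      ltac:(lra) ltac:(lra) ltac:(lra)) as [xi [Hxi Hxi']].
    { intros x Hx. apply (P_dF N lam w w1 HP); lra. }
    { intros x Hx. apply (P_cF N lam w w1 HP); lra. }
    simpl in Hxi'. rewrite Hxi', Rabs_mult, (Rabs_right (r - c)) by lra.
    apply Rmult_le_compat; [apply Rabs_pos| lra| apply Fp_bound; [lra|lra| apply Hm'; lra]| unfold h; lra]. }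
  destruct (mvt01 w w1 c 1 ltac:(lra) ltac:(lra) ltac:(lra)) as [xi0 [Hxi0 Hxi0']].
  { intros x Hx. apply (P_dw N lam w w1 HP); lra. }
  { intros x Hx. apply (P_cw N lam w w1 HP); lra. }
  rewrite Hwc, Hw1 in Hxi0'.
  assert (Hz : w1 xi0 = 0) by (destruct (Req_dec (w1 xi0) 0); [assumption| exfalso; assert (0 < 1 - c) by lra; nra]).
  assert (H3 : ga ^ N <= K * D ^ N * h).
  { pose proof (H2 xi0 ltac:(lra)) as H. rewrite Hz, Ropp_0, pow0_N in H by exact HN.
    rewrite Rminus_0_l, Rabs_Ropp, absF in H. exact H. }
  assert (H4 : G ^ N <= ga ^ N + K * D ^ N * h).
  { pose proof (H2 m' Hm2) as H.
    assert (Rabs ((- w1 m') ^ N) <= Rabs ((- w1 c) ^ N) + Rabs ((- w1 m') ^ N - (- w1 c) ^ N)).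
    { replace ((- w1 m') ^ N) with ((- w1 c) ^ N + ((- w1 m') ^ N - (- w1 c) ^ N)) at 1 by ring.
      apply Rabs_triang. }
    rewrite !absF in H0. fold G ga in H0. lra. }
  assert (H5 : K * D ^ N * h <= G ^ N / 4).
  { assert (D ^ N <= G ^ N) by (apply pow_incr; lra).
    assert (0 <= D ^ N) by (apply pow_le; lra).
    assert (K * h <= 1 / 4) by (unfold K, h; lra).
    assert (0 <= h) by (unfold h; lra).
    replace (K * D ^ N * h) with ((K * h) * D ^ N) by ring.
    apply Rle_trans with (1 / 4 * G ^ N); [apply Rmult_le_compat; try lra; apply Rmult_le_pos; lra| lra]. }
  assert (0 < ga ^ N) by (apply pow_lt; lra).
  lra.
Qed.

Lemma sqrt_facts x : 0 < x < 1 -> 0 < sqrt x < 1 /\ sqrt x * sqrt x = x /\ x <= sqrt x.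
Proof.
  intros Hx. pose proof (sqrt_lt_R0 x ltac:(lra)). pose proof (sqrt_sqrt x ltac:(lra)).
  assert (sqrt x < 1) by (destruct (Rlt_le_dec (sqrt x) 1); [assumption| nra]).
  split; [lra|]. split; [assumption| nra].
Qed.


Theorem lemma3p3 (N : nat) (lam1 : R) :
  (1 <= N)%nat ->
  is_first_eigenvalue_B2 N lam1 ->
  exists delta : R, lam1 < delta /\
    is_eigenvalue_B2 N lam1 /\
    forall lam : R, 0 < lam < delta -> is_eigenvalue_B2 N lam -> lam = lam1.
Proof.
  intros HN [Hl1 [v [v1 [v2 [HC [HS Hpos]]]]]].
  pose proof (Psol_of N lam1 v v1 v2 HC HS) as HPv.
  pose proof (proj2 (proj2 HS)) as Hv1.
  assert (Hv0 : 0 < v 0).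
  { destruct (Rlt_le_dec 0 (v 0)) as [|Hle]; [assumption|]. exfalso.
    destruct Hle as [Hlt|Heq].
    - destruct (P_cw N lam1 v v1 HPv 0 ltac:(lra) (- v 0 / 2) ltac:(lra)) as [d [Hd Hd']].
      set (y := Rmin (1/2) (d/2)).
      assert (Hy : 0 < y <= 1/2) by (unfold y; split; [apply Rmin_pos; lra| apply Rmin_l]).
      assert (Hyd : y <= d / 2) by apply Rmin_r.
      assert (Rabs (v y - v 0) < - v 0 / 2) by (apply Hd'; [lra| rewrite Rminus_0_r, Rabs_right; lra]).
      pose proof (Hpos y ltac:(lra)). unfold Rabs in H; destruct Rcase_abs in H; lra.
    - destruct (Z_lemma N lam1 v v1 HN Hl1 HPv Heq (1/2) ltac:(lra)) as [H _].
      pose proof (Hpos (1/2) ltac:(lra)). lra. }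
  pose proof (pos_eig N lam1 v v1 HN Hl1 HPv Hv0 Hv1 Hpos) as Hv1neg.
  set (K0 := (2 * lam1) ^ N * INR N).
  assert (HK0 : 0 <= K0) by (unfold K0; apply Rmult_le_pos; [apply pow_le; lra| apply pos_INR]).
  set (eta := 1 / (8 * K0 + 2)).
  assert (Heta : 0 < eta <= 1 / 2).
  { unfold eta; split; [apply Rdiv_lt_0_compat; lra|].
    apply Rmult_le_reg_l with (8 * K0 + 2); [lra|]. replace ((8 * K0 + 2) * (1 / (8 * K0 + 2))) with 1 by (field; lra). nra. }
  assert (HKeta : K0 * eta <= 1 / 8).
  { unfold eta. replace (K0 * (1 / (8 * K0 + 2))) with (K0 / (8 * K0 + 2)) by (field; lra).
    apply Rmult_le_reg_l with (8 * (8 * K0 + 2)); [lra|].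
    replace (8 * (8 * K0 + 2) * (K0 / (8 * K0 + 2))) with (8 * K0) by (field; lra). nra. }
  set (delta := lam1 / (1 - eta)).
  assert (Hdel : lam1 < delta /\ delta <= 2 * lam1).
  { unfold delta. split.
    - apply Rmult_lt_reg_l with (1 - eta); [lra|].
      replace ((1 - eta) * (lam1 / (1 - eta))) with lam1 by (field; lra). nra.
    - apply Rmult_le_reg_l with (1 - eta); [lra|].
      replace ((1 - eta) * (lam1 / (1 - eta))) with lam1 by (field; lra). nra. }
  exists delta; split; [tauto|]. split.
  { split; [exact Hl1|]. exists v, v1, v2. split; [exact HC|]. split; [exact HS|].
    exists (1/2). split; [lra|]. pose proof (Hpos (1/2) ltac:(lra)). lra. }
  intros lam [Hlp Hld] [Hl [w [w1 [w2 [HCw [HSw [r0 [Hr0 Hwr0]]]]]]]].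
  pose proof (Psol_of N lam w w1 w2 HCw HSw) as HPw.
  pose proof (proj2 (proj2 HSw)) as Hw1.
  assert (Hw0 : w 0 <> 0).
  { intro H. destruct (Z_lemma N lam w w1 HN Hl HPw H r0 Hr0) as [H' _]. lra. }
  set (a := v 0 / w 0).
  pose proof (P_hom N lam w w1 a HPw) as HPh.
  assert (Hh0 : a * w 0 = v 0) by (unfold a; field; exact Hw0).
  assert (Hh1 : a * w 1 = 0) by (rewrite Hw1; ring).
  destruct (init_sign N lam (fun x => a * w x) (fun x => a * w1 x) HN Hl HPh ltac:(cbv beta; lra) Hh1)
    as [b [Hb Hbs]].
  destruct (total_order_T lam lam1) as [[Hlt|Heq]|Hgt].
  - exfalso.
    destruct (sqrt_facts (lam / lam1)) as [Hc [Hcc Hcx]].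
    { split; [apply Rdiv_lt_0_compat; lra|]. apply Rmult_lt_reg_l with lam1; [lra|].
      replace (lam1 * (lam / lam1)) with lam by (field; lra). lra. }
    set (c := sqrt (lam / lam1)) in *.
    pose proof (P_dil N lam1 v v1 c ltac:(lra) HPv) as HPu.
    assert (Hcl : c * c * lam1 = lam) by (rewrite Hcc; field; lra).
    rewrite Hcl in HPu.
    destruct (uniq N lam (fun r => v (c * r)) (fun r => c * v1 (c * r)) (fun x => a * w x) (fun x => a * w1 x)
      HN Hl HPu HPh) with (r := 1) as [H _].
    + cbv beta. rewrite Rmult_0_r. lra.
    + cbv beta. rewrite Rmult_0_r. lra.
    + intros r Hr. cbv beta. pose proof (Hv1neg (c * r) ltac:(nra)). nra.
    + exists b. split; [exact Hb|]. exact Hbs.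
    + lra.
    + cbv beta in H. rewrite Hh1, Rmult_1_r in H. pose proof (Hpos c ltac:(lra)). lra.
  - exact Heq.
  - exfalso.
    destruct (sqrt_facts (lam1 / lam)) as [Hc [Hcc Hcx]].
    { split; [apply Rdiv_lt_0_compat; lra|]. apply Rmult_lt_reg_l with lam; [lra|].
      replace (lam * (lam1 / lam)) with lam1 by (field; lra). lra. }
    set (c := sqrt (lam1 / lam)) in *.
    pose proof (P_dil N lam (fun x => a * w x) (fun x => a * w1 x) c ltac:(lra) HPh) as HPt.
    assert (Hcl : c * c * lam = lam1) by (rewrite Hcc; field; lra).
    rewrite Hcl in HPt.
    pose proof (uniq N lam1 v v1 (fun r => (fun x => a * w x) (c * r)) (fun r => c * (fun x => a * w1 x) (c * r))
      HN Hl1 HPv HPt) as HU.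
    destruct (HU ltac:(cbv beta; rewrite Rmult_0_r; lra) Hv0 Hv1neg) with (r := 1) as [Hu1 Hu2].
    { exists b. split; [exact Hb|]. intros r Hr. cbv beta.
      pose proof (Hbs (c * r) ltac:(split; nra)). cbv beta in H. nra. }
    { lra. }
    cbv beta in Hu1, Hu2. rewrite Rmult_1_r in Hu1, Hu2.
    pose proof (Hv1neg 1 ltac:(lra)) as Hv11.
    apply (after_zero N lam (fun x => a * w x) (fun x => a * w1 x) c HN Hl HPh ltac:(lra)).
    + cbv beta. rewrite Hu1, Hv1. reflexivity.
    + exact Hh1.
    + cbv beta. intro H0. rewrite H0, Rmult_0_r in Hu2. lra.
    + assert (H1 : 1 - eta < lam1 / lam).
      { apply Rmult_lt_reg_l with lam; [lra|].
        replace (lam * (lam1 / lam)) with lam1 by (field; lra).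
        assert (lam * (1 - eta) < delta * (1 - eta)) by (apply Rmult_lt_compat_r; lra).
        unfold delta in H. replace (lam1 / (1 - eta) * (1 - eta)) with lam1 in H by (field; lra). lra. }
      assert (H2 : lam ^ N <= (2 * lam1) ^ N) by (apply pow_incr; lra).
      assert (H3 : 0 <= 1 - c) by lra.
      assert (H4 : 0 <= INR N) by apply pos_INR.
      apply Rle_trans with (K0 * eta); [|lra].
      unfold K0. replace (lam ^ N * INR N * (1 - c)) with ((lam ^ N * INR N) * (1 - c)) by ring.
      apply Rmult_le_compat; [apply Rmult_le_pos; [apply pow_le; lra| lra]| lra| apply Rmult_le_compat_r; lra| lra].
Qed.
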